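(* Consider the NOMA-aided cell-free massive MIMO UE clustering problem with fixed power allocation described in the context. A clustering matrix $\mathbf X$ is an all-stable solution if there is no negative differ-cluster loop in the extended graph $D(\mathcal N^e,\varepsilon;\mathbf X)$ whose associated cluster change increases the ASR while satisfying all constraints of the clustering problem.
   Context: There are $N$ URLLC UEs and $G$ clusters; clustering matrix $\mathbf X=[x_{gn}]$ with $x_{gn}\in\{0,1\}$, $\sum_g x_{gn}=1$, and $\pi_n$ the cluster of UE $n$. With fixed powers, each UE has rate $\hat R_n(\mathbf X)=\frac{\eta}{\ln 2}(\ln(1+\bar\gamma_n)-a_nM(\bar\gamma_n))$ ($\bar\gamma_n$ its effective average SINR, $\eta,a_n>0$ constants, $M(\gamma)=\sqrt{1-(1+\gamma^{-1})^{-2}}$), and the ASR is $\sum_n\hat R_n(\mathbf X)$. The clustering problem is: maximize the ASR over $\mathbf X$ subject to $\hat R_n\ge\hat R_n^{req}$ for all $n$ and each UE belonging to exactly one cluster. Cluster rate $\omega_g(\mathbf X)=\sum_n x_{gn}(\ln(1+\bar\gamma_n)-a_nM(\bar\gamma_n))$. Notation $n\to n'$: UE $n$ is moved into the cluster of UE $n'$ and $n'$ is removed from it. For UEs $n_1,\dots,n_K$ in different clusters: they form a $K$-exchange union if $n_1\to n_2,\dots,n_{K-1}\to n_K,n_K\to n_1$ yields $\tilde{\mathbf X}$ with ASR$(\mathbf X)\le$ ASR$(\tilde{\mathbf X})$; they form a $K$-shift union if $n_1\to n_2,\dots,n_{K-2}\to n_{K-1}$ followed by adding $n_{K-1}$ to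 the cluster of $n_K$ yields $\tilde{\mathbf X}$ with ASR$(\mathbf X)\le$ ASR$(\tilde{\mathbf X})$. $\mathbf X$ is an all-stable solution if no shift union or exchange union exists with all constraints of the clustering problem satisfied. The extended weighted directed graph $D(\mathcal N^e,\varepsilon;\mathbf X)$ has as nodes all real UEs plus one virtual UE $n_g^v$ in each cluster $g$ (virtual UEs have rate $0$, receive no power, and do not take part in SIC ordering), edges only between nodes in different clusters, and weights $z_{ij}=\omega_{\pi_j}(\mathbf X)-\omega_{\pi_j}(x_{\pi_j i}=1,x_{\pi_j j}=0,\mathbf X_{-i,j})$ for $\pi_i\ne\pi_j$ (rate of cluster $\pi_j$ before minus after placing $i$ in it and removing $j$, other assignments unchanged) and $z_{ij}=\infty$ otherwise. A negative differ-cluster loop is a directed cycle with total weight less than $0$ whose nodes all lie in different clusters; its associated cluster change is $n_1\to n_2\to\cdots\to n_K\to n_1$ along the cycle. *)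

(* Defs.v *)
From HB Require Import structures.
From mathcomp Require Import all_boot all_order all_algebra.
From mathcomp Require Import all_classical all_reals all_analysis.
Set Implicit Arguments. Unset Strict Implicit. Unset Printing Implicit Defensive.
Import Order.TTheory GRing.Theory Num.Theory.
Local Open Scope ring_scope.

Section Defs.
Variables (R : realType) (N G : nat).

(* A clustering matrix X = [x_gn] with x_gn in {0,1} and sum_g x_gn = 1 is
   represented by the map n |-> pi_n (the unique g with x_gn = 1). *)
Definition clustering := {ffun 'I_N -> 'I_G}.

Definition members (X : clustering) (g : 'I_G) : {set 'I_N} :=
  [set n | X n == g].

Definition Mfun (gam : R) : R := Num.sqrt (1 - (1 + gam^-1) ^-2).

(* ln(1 + gamma_n) - a_n M(gamma_n), where gam X n is the effective average
   SINR of UE n under clustering X *)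
Definition urate (a : 'I_N -> R) (gam : clustering -> 'I_N -> R)
  (X : clustering) (n : 'I_N) : R :=
  ln (1 + gam X n) - a n * Mfun (gam X n).

Definition rate (eta : R) (a : 'I_N -> R) (gam : clustering -> 'I_N -> R)
  (X : clustering) (n : 'I_N) : R :=
  eta / ln 2 * urate a gam X n.

Definition ASR eta a gam (X : clustering) : R := \sum_n rate eta a gam X n.

Definition omega a gam (X : clustering) (g : 'I_G) : R :=
  \sum_(n | X n == g) urate a gam X n.

(* constraints of the clustering problem (the "exactly one cluster"
   constraint is built into the type clustering) *)
Definition feasible eta a gam (Rreq : 'I_N -> R) (X : clustering) : Prop :=
  forall n, Rreq n <= rate eta a gam X n.

(* K-exchange: n_k -> n_{k+1} (indices mod K), i.e. n_k joins the cluster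
   of n_{k+1} *)
Definition exch_change (X : clustering) (ns : seq 'I_N) : clustering :=
  [ffun n => if n \in ns then X (nth n ns ((index n ns).+1 %% size ns))
             else X n].

(* K-shift: n_1 -> n_2, ..., n_{K-2} -> n_{K-1}, then n_{K-1} added to the
   cluster of n_K: n_k joins the cluster of n_{k+1} for k = 1..K-1, n_K
   stays. *)
Definition shift_change (X : clustering) (ns : seq 'I_N) : clustering :=
  [ffun n => if (n \in ns) && (index n ns < (size ns).-1)%N
             then X (nth n ns (index n ns).+1) else X n].

Definition diff_cluster_UEs (X : clustering) (ns : seq 'I_N) : Prop :=
  (2 <= size ns)%N /\ uniq (map X ns).

Definition is_exchange_union eta a gam (X : clustering) (ns : seq 'I_N) : Prop :=
  diff_cluster_UEs X ns /\ ASR eta a gam X < ASR eta a gam (exch_change X ns).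

Definition is_shift_union eta a gam (X : clustering) (ns : seq 'I_N) : Prop :=
  diff_cluster_UEs X ns /\ ASR eta a gam X < ASR eta a gam (shift_change X ns).

Definition all_stable eta a gam Rreq (X : clustering) : Prop :=
  ~ exists ns : seq 'I_N,
      (is_exchange_union eta a gam X ns /\
         feasible eta a gam Rreq (exch_change X ns))
   \/ (is_shift_union eta a gam X ns /\
         feasible eta a gam Rreq (shift_change X ns)).

(* nodes: real UEs (inl n) and one virtual UE per cluster (inr g = n_g^v) *)
Definition node := ('I_N + 'I_G)%type.

Definition clus (X : clustering) (i : node) : 'I_G :=
  match i with inl n => X n | inr g => g end.

(* put node i into cluster g (virtual UEs are not part of the clustering
   matrix, so moving them changes nothing) *)
Definition place (X : clustering) (i : node) (g : 'I_G) : clustering :=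
  match i with
  | inl n => [ffun m => if m == n then g else X m]
  | inr _ => X
  end.

(* clustering with i placed in cluster pi_j and j removed from it
   (j is put into pi_i; only cluster pi_j matters for the weight) *)
Definition swap_nodes (X : clustering) (i j : node) : clustering :=
  place (place X j (clus X i)) i (clus X j).

Definition zw a gam (X : clustering) (i j : node) : \bar R :=
  if clus X i != clus X j then
    ((omega a gam X (clus X j) - omega a gam (swap_nodes X i j) (clus X j))%R)%:E
  else +oo%E.

(* a directed cycle c = [n_1; ...; n_K] (edges n_k -> n_{k+1}, n_K -> n_1)
   whose nodes all lie in different clusters *)
Definition differ_cluster_loop (X : clustering) (c : seq node) : Prop :=
  (2 <= size c)%N /\ uniq (map (clus X) c).

Definition loop_weight a gam (X : clustering) (c : seq node) : \bar R :=
  (\sum_(p <- zip c (rot 1 c)) zw a gam X p.1 p.2)%E.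

(* cluster change associated with the loop: n_1 -> n_2 -> ... -> n_K -> n_1,
   i.e. each real UE n_k of the loop joins the cluster of n_{k+1} (mod K) *)
Definition loop_change (X : clustering) (c : seq node) : clustering :=
  [ffun n => if inl n \in c
             then clus X (nth (inl n) c ((index (inl n) c).+1 %% size c))
             else X n].

Definition negative_differ_cluster_loop a gam (X : clustering) (c : seq node) : Prop :=
  differ_cluster_loop X c /\ (loop_weight a gam X c < 0)%E.

End Defs.

(* Main.v *)
Require Import Defs.
From HB Require Import structures.
From mathcomp Require Import all_boot all_order all_algebra.
From mathcomp Require Import all_classical all_reals all_analysis.
Import Order.TTheory GRing.Theory Num.Theory.
Set Implicit Arguments. Unset Strict Implicit.


Lemma place_val N G (X : clustering N G) (i : node N G) g n :
  place X i g n = if i == inl n then g else X n.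
Proof. case: i => [m|h] //=; rewrite ffunE; by case: eqP => [->|]; case: eqP => // [[]] ->. Qed.

Lemma next_mod (T : eqType) (c : seq T) x :
  x \in c -> nth x c ((index x c).+1 %% size c) = next c x.
Proof.
move=> xc; rewrite next_nth xc; case: c xc => [|y p] //= xc.
have : index x (y :: p) <= size p by rewrite -ltnS index_mem.
rewrite /=; case: (y == x) => /= Hi.
  by case: p {xc Hi} => [|z p] //=; rewrite modn_small.
rewrite leq_eqVlt in Hi; case/orP: Hi => [/eqP Hi|Hi].
  by rewrite Hi modnn /= nth_default // -Hi.
by rewrite modn_small ?ltnS //= (set_nth_default y).
Qed.

Lemma loop_change_val N G (X : clustering N G) c n :
  loop_change X c n = if inl n \in c then clus X (next c (inl n)) else X n.
Proof. by rewrite ffunE; case: ifP => // /next_mod ->. Qed.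

Lemma clus_inj N G (X : clustering N G) c :
  uniq (map (clus X) c) -> {in c &, injective (clus X)}.
Proof.
elim: c => //= z c IH /andP[zn U] x y; rewrite !inE.
move=> /predU1P[->|xc] /predU1P[->|yc] E //.
- by case/negP: zn; rewrite E map_f.
- by case/negP: zn; rewrite -E map_f.
- exact: IH.
Qed.

Lemma next_neq (T : eqType) (c : seq T) x :
  uniq c -> (2 <= size c)%N -> x \in c -> next c x != x.
Proof.
move=> U s2 xc; rewrite -next_mod //.
have E2 : nth x c (index x c) = x := nth_index x xc.
have ik := xc; rewrite -index_mem in ik.
rewrite -[X in _ != X]E2 nth_uniq //; last first.
  by rewrite ltn_mod; case: (size c) s2.
move: (index x c) (size c) s2 ik => i k s2 ik.
case: (ltnP i.+1 k) => h.
  by rewrite modn_small // -[X in _ == X]addn0 -addn1 eqn_add2l.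
have Ek : k = i.+1 by apply/eqP; rewrite eqn_leq ik h.
subst k; rewrite modnn; by case: i s2 {h ik}.
Qed.

Lemma zip_next (T : eqType) (c : seq T) :
  uniq c -> zip c (rot 1 c) = map (fun x => (x, next c x)) c.
Proof.
move=> U; case: c U => [|y p] // U.
apply: (@eq_from_nth _ (y, y)); first by rewrite size_zip size_map size_rot minnn.
rewrite size_zip size_rot minnn => i hi.
rewrite nth_zip ?size_rot // (nth_map y) // rot1_cons nth_rcons.
rewrite next_nth mem_nth // index_uniq //.
case: ltngtP => //.
  by move=> lt; move: hi; rewrite /= ltnS leqNgt lt.
by move=> ->; rewrite [nth y p _]nth_default.
Qed.

Lemma exch_eq N G (X : clustering N G) (ns : seq 'I_N) :
  (0 < size ns)%N ->
  exch_change X ns = loop_change X (map (@inl 'I_N 'I_G) ns).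
Proof.
move=> s0; apply/ffunP => n; rewrite !ffunE (mem_map (@inl_inj _ _)).
case: ifP => // nin.
rewrite (index_map (@inl_inj _ _)) size_map (nth_map n) //.
by rewrite ltn_mod.
Qed.

Lemma shift_eq N G (X : clustering N G) (s : seq 'I_N) z :
  uniq (rcons s z) ->
  shift_change X (rcons s z) =
  loop_change X (rcons (map (@inl 'I_N 'I_G) s) (inr (X z))).
Proof.
move=> U; apply/ffunP => n; rewrite !ffunE.
move: U; rewrite rcons_uniq => /andP[zs Us].
set c := rcons (map _ s) _.
have E1 : (inl n \in c) = (n \in s).
  by rewrite mem_rcons inE /= (mem_map (@inl_inj _ _)).
rewrite E1 size_rcons /= mem_rcons inE -cats1 index_cat.
case: (boolP (n \in s)) => ns; last first.
  rewrite orbF; case: (n =P z) => //= ->.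
  by rewrite eqxx addn0 ltnn.
rewrite orbT /= index_mem ns /=.
rewrite /c -cats1 index_cat (mem_map (@inl_inj _ _)) ns (index_map (@inl_inj _ _)).
rewrite size_cat size_map /= addn1.
have hi : (index n s < size s)%N by rewrite index_mem.
rewrite modn_small ?ltnS //.
rewrite !cats1 !nth_rcons size_map.
case: ifP => h; first by rewrite (nth_map n).
by case: ifP.
Qed.

Local Open Scope ring_scope.

Lemma omega_members (R : realType) N G (a : 'I_N -> R) (gam : clustering N G -> 'I_N -> R)
  (gam_local : forall (Y Y' : clustering N G) n,
      Y n = Y' n -> members Y (Y n) = members Y' (Y' n) -> gam Y n = gam Y' n)
  (Y Y' : clustering N G) g :
  members Y g = members Y' g -> omega a gam Y g = omega a gam Y' g.
Proof.
move=> Em.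
have Eb n : (Y n == g) = (Y' n == g).
  by move/setP: Em => /(_ n); rewrite /members !inE.
rewrite /omega (eq_bigl (fun n => Y' n == g)) //.
apply: eq_bigr => n Hn.
have Hn' : Y n == g by rewrite Eb.
rewrite /urate (gam_local Y Y' n) //.
  by rewrite (eqP Hn) (eqP Hn').
by rewrite (eqP Hn) (eqP Hn').
Qed.

Lemma members_edge N G (X : clustering N G) (c : seq (node N G)) x :
  differ_cluster_loop X c -> x \in c ->
  members (swap_nodes X x (next c x)) (clus X (next c x)) =
  members (loop_change X c) (clus X (next c x)).
Proof.
move=> [s2 Um] xc.
have U := map_uniq Um.
have inj := clus_inj Um.
have jc : next c x \in c by rewrite mem_next.
apply/setP => n; rewrite /members !inE loop_change_val /swap_nodes !place_val.
case: (boolP (inl n \in c)) => nc.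
- case: (x =P inl n) => [<-|xn]; first by rewrite !eqxx.
  case: (next c x =P inl n) => [jn|jn].
    rewrite -jn; transitivity false.
      apply/negP => /eqP /(inj _ _ xc jc) E.
      by move: (next_neq U s2 xc); rewrite -E eqxx.
    apply/esym/negP => /eqP /(inj _ _ _ jc) E.
    have := next_neq U s2 jc; rewrite E ?eqxx //.
    by rewrite mem_next.
  transitivity false.
    apply/negP => /eqP E.
    have := inj (inl n) _ nc jc E; move=> E2; by case: jn.
  apply/esym/negP => /eqP E.
  have := inj _ _ _ jc E; rewrite mem_next => /(_ nc) E2.
  have := congr1 (prev c) E2; rewrite !prev_next // => E3.
  by case: xn.
- have xn : x == inl n = false.
    by apply/negP => /eqP E; move: nc; rewrite -E xc.
  have jn : next c x == inl n = false.
    by apply/negP => /eqP E; move: nc; rewrite -E jc.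
  by rewrite xn jn.
Qed.

Lemma members_out N G (X : clustering N G) (c : seq (node N G)) g :
  g \notin map (clus X) c ->
  members (loop_change X c) g = members X g.
Proof.
move=> gn; apply/setP => n; rewrite /members !inE loop_change_val.
case: ifP => // nc.
transitivity false.
  apply/negP => /eqP E; move: gn; rewrite -E map_f //.
  by rewrite mem_next.
apply/esym/negP => /eqP E; move: gn; rewrite -E.
by rewrite (map_f (clus X) nc).
Qed.

Lemma weight_eq (R : realType) N G (a : 'I_N -> R) (gam : clustering N G -> 'I_N -> R)
  (gam_local : forall (Y Y' : clustering N G) n,
      Y n = Y' n -> members Y (Y n) = members Y' (Y' n) -> gam Y n = gam Y' n)
  (X : clustering N G) (c : seq (node N G)) :
  differ_cluster_loop X c ->
  loop_weight a gam X c =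
  (\sum_g omega a gam X g - \sum_g omega a gam (loop_change X c) g)%:E.
Proof.
move=> D; have [s2 Um] := D.
have U := map_uniq Um.
have inj := clus_inj Um.
set Y := loop_change X c.
set H := fun g => omega a gam X g - omega a gam Y g.
rewrite /loop_weight zip_next // big_map.
transitivity (\sum_(x <- c) (H (clus X (next c x)))%:E)%E.
  apply: eq_big_seq => x xc /=.
  have jc : next c x \in c by rewrite mem_next.
  rewrite /zw ifT.
    by rewrite /H (omega_members a gam_local (members_edge D xc)).
  apply/negP => /eqP /(inj _ _ xc jc) E.
  by move: (next_neq U s2 xc); rewrite -E eqxx.
rewrite sumEFin; congr (_%:E).
have Er : map (next c) c = rot 1 c.
  have := congr1 unzip2 (zip_next U).
  rewrite unzip2_zip ?size_rot // => ->.
  by rewrite /unzip2 -map_comp.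
rewrite -(big_map (next c) xpredT (fun x => H (clus X x))) Er.
rewrite (perm_big c) ?perm_rot //.
rewrite -(big_map (clus X) xpredT H) big_uniq //.
rewrite -sumrB [RHS](bigID (fun g => g \in map (clus X) c)) /=.
rewrite [X in _ = _ + X]big1 ?addr0 //.
move=> g gn; rewrite /H (omega_members a gam_local (members_out gn)) subrr //.
Qed.

Lemma ASR_eq (R : realType) N G (eta : R) (a : 'I_N -> R) (gam : clustering N G -> 'I_N -> R)
  (Y : clustering N G) :
  ASR eta a gam Y = eta / ln 2 * \sum_g omega a gam Y g.
Proof.
rewrite /ASR /rate -mulr_sumr; congr (_ * _).
rewrite /omega (partition_big (fun n => Y n) xpredT) //.
Qed.

Lemma neg_loop (R : realType) N G (eta : R) (a : 'I_N -> R) (gam : clustering N G -> 'I_N -> R)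
  (eta_gt0 : 0 < eta)
  (gam_local : forall (Y Y' : clustering N G) n,
      Y n = Y' n -> members Y (Y n) = members Y' (Y' n) -> gam Y n = gam Y' n)
  (X : clustering N G) (c : seq (node N G)) :
  differ_cluster_loop X c ->
  ASR eta a gam X < ASR eta a gam (loop_change X c) ->
  negative_differ_cluster_loop a gam X c.
Proof.
move=> D H; split => //.
rewrite (weight_eq a gam_local D) lte_fin subr_lt0.
move: H; rewrite !ASR_eq ltr_pM2l //.
by rewrite divr_gt0 // ln_gt0 // ltr1n.
Qed.

Unset Implicit Arguments. Set Strict Implicit.

Theorem theorem2 (R : realType) (N G : nat)
  (eta : R) (a : 'I_N -> R) (gam : clustering N G -> 'I_N -> R)
  (Rreq : 'I_N -> R) (X : clustering N G)
  (eta_gt0 : 0 < eta) (a_gt0 : forall n, 0 < a n)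
  (gam_gt0 : forall Y n, 0 < gam Y n)
  (gam_local : forall (Y Y' : clustering N G) n,
      Y n = Y' n -> members Y (Y n) = members Y' (Y' n) -> gam Y n = gam Y' n) :
  (forall c : seq (node N G),
      negative_differ_cluster_loop a gam X c ->
      ~ (ASR eta a gam X < ASR eta a gam (loop_change X c)
         /\ feasible eta a gam Rreq (loop_change X c))) ->
  all_stable eta a gam Rreq X.
Proof.
move=> Hloop [ns [[[[s2 Um] Hlt] F] | [[[s2 Um] Hlt] F]]].
- set c := map (@inl 'I_N 'I_G) ns.
  have Ec := exch_eq X (ltnW s2).
  have D : differ_cluster_loop X c.
    split; first by rewrite size_map.
    by rewrite /c -map_comp.
  rewrite Ec in Hlt F.
  exact: (Hloop c (neg_loop eta_gt0 gam_local D Hlt)).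
- move: s2 Um Hlt F; case/lastP: ns => [|s z] // s2 Um Hlt F.
  have U := map_uniq Um.
  set c := rcons (map (@inl 'I_N 'I_G) s) (inr (X z)).
  have Ec := shift_eq X U.
  have D : differ_cluster_loop X c.
    split; first by rewrite /c size_rcons size_map -(size_rcons s z).
    by rewrite /c map_rcons -map_comp /= -map_rcons.
  rewrite Ec in Hlt F.
  exact: (Hloop c (neg_loop eta_gt0 gam_local D Hlt)).
Qed.
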